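(* Let $M$ be a complex matrix with $2^{k+n}$ columns (and $2^{k+n+m}$ rows for some $m\ge0$) such that $M^\dagger M\preceq I$, and let $\Sigma$ be a $2^k\times 2^k$ positive semidefinite matrix. For an $n$-qubit state $\rho$ define $A^\rho_M(\Sigma)=\mathrm{Tr}_{>k}\big(M(\Sigma\otimes\rho)M^\dagger\big)$. Let $\rho_{\mathrm{mm}}=I/2^n$ and, for a non-identity $n$-qubit Pauli observable $P$, $\rho_P=(I+P)/2^n$. Then $$\mathbb{E}_P\left[\big\|A^{\rho_{\mathrm{mm}}}_M(\Sigma)-A^{\rho_P}_M(\Sigma)\big\|_{\mathrm{tr}}^2\right]\ \le\ \frac{1}{2^{n-k}}\cdot\frac{1}{2^{2n}-1}\cdot\Big(\mathrm{Tr}\big(M^\dagger M(\Sigma\otimes I_{2^n})\big)\Big)^2,$$ where $\mathbb{E}_P$ is over a uniformly random one of the $4^n-1$ non-identity Pauli observables.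
   Context: $\mathrm{Tr}_{>k}$ denotes the partial trace over all qubits except the first $k$. $\|\cdot\|_{\mathrm{tr}}$ is the trace norm. An $n$-qubit Pauli observable is a tensor product $\sigma_1\otimes\cdots\otimes\sigma_n$ with each $\sigma_j\in\{I,X,Y,Z\}$ (the standard Pauli matrices); non-identity means not equal to $I^{\otimes n}$. $I_{2^n}$ is the $2^n\times2^n$ identity. *)

(* Defs.v *)
From HB Require Import structures.
From mathcomp Require Import all_boot all_order all_algebra all_field.
From mathcomp Require mxtens.
Set Implicit Arguments.
Unset Strict Implicit.
Unset Printing Implicit Defensive.
Import Order.TTheory GRing.Theory Num.Theory.
Local Open Scope ring_scope.

Definition adjmx {m n} (A : 'M[algC]_(m, n)) : 'M[algC]_(n, m) := (map_mx Num.conj A)^T.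

(* Kronecker product (mathcomp-real-closed's tensmx; index (i,j) of 'I_(m*n) is i*n+j) *)
Definition kron {m n p q} (A : 'M[algC]_(m, n)) (B : 'M[algC]_(p, q)) :
  'M[algC]_(m * p, n * q) := mxtens.tensmx A B.

Definition psdmx {n} (A : 'M[algC]_n) : Prop :=
  A = adjmx A /\ forall v : 'cV[algC]_n, 0 <= (adjmx v *m A *m v) 0 0.

Definition loewner_le {n} (A B : 'M[algC]_n) : Prop := psdmx (B - A).

(* Partial trace over the second tensor factor: for A on C^p (x) C^q, returns
   Tr_2 A on C^p.  With p = 2^k, q = 2^(n+m) this is Tr_{>k}. *)
Definition ptrace2 {p q} (A : 'M[algC]_(p * q)) : 'M[algC]_p :=
  \matrix_(i, j) \sum_(l < q) A (mxtens.mxtens_index (i, l)) (mxtens.mxtens_index (j, l)).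

(* Trace norm ||X||_tr = Tr sqrt(X^dagger X) = sum of the square roots of the
   eigenvalues of the (Hermitian, hence normal) matrix X^dagger X, obtained from
   the library spectral decomposition. *)
Definition trnorm {n} (X : 'M[algC]_n) : algC :=
  \sum_(i < n) sqrtC (spectral_diag (adjmx X *m X) 0 i).

(* single-qubit Paulis: 0 -> I, 1 -> X, 2 -> Y, 3 -> Z *)
Definition pauli1 (a : 'I_4) : 'M[algC]_2 :=
  match val a with
  | 0%N => 1%:M
  | 1%N => \matrix_(i < 2, j < 2) (if i != j then 1 else 0)
  | 2%N => \matrix_(i < 2, j < 2)
             (if i == j then 0 else if val i == 0%N then - 'i else 'i)
  | _ => \matrix_(i < 2, j < 2) (if i == j then (if val i == 0%N then 1 else -1) else 0)
  end.

Fixpoint pauli (n : nat) : {ffun 'I_n -> 'I_4} -> 'M[algC]_(2 ^ n) :=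
  match n return {ffun 'I_n -> 'I_4} -> 'M[algC]_(2 ^ n) with
  | 0%N => fun _ => 1%:M
  | n'.+1 => fun s =>
      castmx (esym (expnS 2 n'), esym (expnS 2 n'))
        (kron (pauli1 (s ord0)) (pauli [ffun i : 'I_n' => s (lift ord0 i)]))
  end.

Definition pauli_id (n : nat) : {ffun 'I_n -> 'I_4} := [ffun=> ord0].

Definition rho_mm (n : nat) : 'M[algC]_(2 ^ n) := (2 ^+ n)^-1 *: 1%:M.
Definition rho_P (n : nat) (s : {ffun 'I_n -> 'I_4}) : 'M[algC]_(2 ^ n) :=
  (2 ^+ n)^-1 *: (1%:M + pauli s).

Definition Amap {k n m} (M : 'M[algC]_(2 ^ k * 2 ^ (n + m), 2 ^ k * 2 ^ n))
  (Sigma : 'M[algC]_(2 ^ k)) (rho : 'M[algC]_(2 ^ n)) : 'M[algC]_(2 ^ k) :=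
  ptrace2 (M *m kron Sigma rho *m adjmx M).

(* Main.v *)
Require Import Defs.
From HB Require Import structures.
From mathcomp Require Import all_boot all_order all_algebra all_field.
From mathcomp Require Import mxtens.
From mathcomp Require Import ring.
Import Order.TTheory GRing.Theory Num.Theory.
Local Open Scope ring_scope.
Lemma adjmxE m n (A : 'M[algC]_(m, n)) i j : adjmx A i j = (A j i)^*.
Proof. by rewrite /adjmx !mxE. Qed.

Lemma adjmxK m n (A : 'M[algC]_(m, n)) : adjmx (adjmx A) = A.
Proof. by apply/matrixP => i j; rewrite !adjmxE conjCK. Qed.

Lemma adjmxM m n p (A : 'M[algC]_(m, n)) (B : 'M[algC]_(n, p)) :
  adjmx (A *m B) = adjmx B *m adjmx A.
Proof.
apply/matrixP => i j; rewrite adjmxE !mxE rmorph_sum; apply: eq_bigr => l _.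
by rewrite !adjmxE rmorphM mulrC.
Qed.

Lemma sum_tens d N (F : 'I_(d * N) -> algC) :
  \sum_x F x = \sum_(a < d) \sum_(b < N) F (mxtens_index (a, b)).
Proof.
rewrite pair_big /= (reindex (@mxtens_index d N)) //=.
  by apply: eq_bigr => [[a b]].
by exists (@mxtens_unindex d N) => x _; rewrite (mxtens_indexK, mxtens_unindexK).
Qed.

Definition fcons {n} {T : finType} (p : T * {ffun 'I_n -> T}) : {ffun 'I_n.+1 -> T} :=
  [ffun i : 'I_n.+1 => if unlift ord0 i is Some j then p.2 j else p.1].

Lemma sum_ffunS n (T : finType) (F : {ffun 'I_n.+1 -> T} -> algC) :
  \sum_s F s = \sum_(a : T) \sum_(s : {ffun 'I_n -> T}) F (fcons (a, s)).
Proof.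
rewrite pair_big /= (reindex (@fcons n T)) //=.
exists (fun s => (s ord0, [ffun i => s (lift ord0 i)])) => [[a s] _|s _].
  rewrite /fcons /= ffunE unlift_none; congr pair.
  by apply/ffunP => i; rewrite !ffunE liftK.
apply/ffunP => i; rewrite /fcons ffunE /=.
by case: unliftP => [j ->|->]; rewrite ?ffunE.
Qed.

Lemma fcons0 n (T : finType) a (s : {ffun 'I_n -> T}) : fcons (a, s) ord0 = a.
Proof. by rewrite /fcons ffunE unlift_none. Qed.
Lemma fconsS n (T : finType) a (s : {ffun 'I_n -> T}) :
  [ffun i => fcons (a, s) (lift ord0 i)] = s.
Proof. by apply/ffunP => i; rewrite !ffunE liftK. Qed.
Lemma pauli1_orth (b c b' c' : 'I_2) :
  \sum_(a : 'I_4) pauli1 a b c * (pauli1 a b' c')^* =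
  2%:R * ((b == b')%:R * (c == c')%:R).
Proof.
rewrite (big_ord_recl 3) !big_ord_recr big_ord0 /= add0r.
rewrite /pauli1 /=.
case: b => [[|[|//]] ?]; case: c => [[|[|//]] ?];
case: b' => [[|[|//]] ?]; case: c' => [[|[|//]] ?];
rewrite !mxE /= ?conjC0 ?conjC1 ?conjCi ?rmorphN ?conjC1 /= ;
rewrite ?mul0r ?mulr0 ?mul1r ?mulr1 ?addr0 ?add0r ?mulrNN ?mulNr ?mulrN ?opprK -?expr2 ?sqrCi ?opprK; try done.
all: rewrite ?conjC1 ?conjCi ?mulrN ?mulr1 -?expr2 ?sqrCi ?opprK ?subrr //.
Qed.
Lemma tens_eq d N (a a' : 'I_d) (b b' : 'I_N) :
  (mxtens_index (a, b) == mxtens_index (a', b')) = (a == a') && (b == b').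
Proof. by rewrite (inj_eq (can_inj (@mxtens_indexK d N))) xpair_eqE. Qed.

Lemma pauli_orth n (b c b' c' : 'I_(2 ^ n)) :
  \sum_(s : {ffun 'I_n -> 'I_4}) pauli s b c * (pauli s b' c')^* =
  (2 ^ n)%:R * ((b == b')%:R * (c == c')%:R).
Proof.
elim: n b c b' c' => [|n IH] b c b' c'.
  rewrite (big_pred1 [ffun => ord0]); last first.
    by move=> s; symmetry; apply/eqP/ffunP => -[].
  rewrite /= !mxE !ord1 eqxx /= conjC1 mulr1 mul1r //.
rewrite sum_ffunS /=.
under eq_bigr => a _ do under eq_bigr => s _ do
  rewrite !castmxE fcons0 fconsS.
rewrite -(inj_eq (@cast_ord_inj _ _ (esym (esym (expnS 2 n))))).
rewrite -[(c == c')](inj_eq (@cast_ord_inj _ _ (esym (esym (expnS 2 n))))).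
move: (cast_ord _ b) (cast_ord _ c) (cast_ord _ b') (cast_ord _ c').
move=> B C B' C'.
case: (mxtens_indexP B) => b1 b2; case: (mxtens_indexP C) => c1 c2.
case: (mxtens_indexP B') => b1' b2'; case: (mxtens_indexP C') => c1' c2'.
rewrite !tens_eq.
under eq_bigr => a _ do under eq_bigr => s _ do
  rewrite /kron !tensmxE rmorphM mulrACA.
under eq_bigr => a _ do rewrite -mulr_sumr IH.
rewrite -mulr_suml pauli1_orth expnS natrM.
case: (b1 == b1'); case: (b2 == b2'); case: (c1 == c1'); case: (c2 == c2'); rewrite /= ?mulr0n ?mulr1n ?mulr0 ?mul0r ?mulr1 ?mul1r //.
all: by rewrite ?(mulr0, mul0r).
Qed.
Lemma sum_delta N (b : 'I_N) (F : 'I_N -> algC) :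
  \sum_b' F b' * (b == b')%:R = F b.
Proof.
rewrite (bigD1 b) //= eqxx mulr1 big1 ?addr0 // => i /negbTE.
by rewrite eq_sym => ->; rewrite mulr0.
Qed.

Lemma pauli_complete n (g : 'I_(2 ^ n) -> 'I_(2 ^ n) -> algC) :
  \sum_(s : {ffun 'I_n -> 'I_4}) `|\sum_b \sum_c g b c * pauli s b c| ^+ 2 =
  (2 ^ n)%:R * \sum_b \sum_c `|g b c| ^+ 2.
Proof.
under eq_bigr => s _ do rewrite normCK rmorph_sum mulr_suml.
under eq_bigr => s _ do under eq_bigr => b _ do rewrite mulr_suml.
under eq_bigr => s _ do under eq_bigr => b _ do under eq_bigr => c _ do
  rewrite mulr_sumr.
under eq_bigr => s _ do
  under eq_bigr => b _ do under eq_bigr => c _ do under eq_bigr => b' _ do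
  rewrite rmorph_sum mulr_sumr.
rewrite exchange_big /=.
under eq_bigr => b _ do rewrite exchange_big /=.
under eq_bigr => b _ do under eq_bigr => c _ do rewrite exchange_big /=.
under eq_bigr => b _ do under eq_bigr => c _ do under eq_bigr => b' _ do
  rewrite exchange_big /=.
under eq_bigr => b _ do under eq_bigr => c _ do under eq_bigr => b' _ do
  under eq_bigr => c' _ do under eq_bigr => s _ do rewrite rmorphM mulrACA.
under eq_bigr => b _ do under eq_bigr => c _ do under eq_bigr => b' _ do
  under eq_bigr => c' _ do rewrite -mulr_sumr pauli_orth.
rewrite mulr_sumr; apply: eq_bigr => b _.
rewrite mulr_sumr; apply: eq_bigr => c _.
under eq_bigr => b' _ do under eq_bigr => c' _ do rewrite !mulrA.
under eq_bigr => b' _ do rewrite sum_delta.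
by rewrite sum_delta normCK mulrC.
Qed.
Lemma cs_sum d (a : 'I_d -> algC) : (forall i, 0 <= a i) ->
  (\sum_i a i) ^+ 2 <= d%:R * \sum_i a i ^+ 2.
Proof.
move=> a0.
have H : 0 <= \sum_i \sum_j (a i - a j) ^+ 2.
  apply: sumr_ge0 => i _; apply: sumr_ge0 => j _.
  by rewrite -realEsqr realB // ger0_real.
have E : \sum_i \sum_j (a i - a j) ^+ 2 =
    2%:R * (d%:R * \sum_i a i ^+ 2 - (\sum_i a i) ^+ 2).
  under eq_bigr => i _ do under eq_bigr => j _ do
    rewrite sqrrB.
  under eq_bigr => i _ do rewrite !big_split /= sumrN sumr_const card_ord.
  under eq_bigr => i _ do rewrite sumrMnl -mulr_sumr.
  rewrite !big_split /= sumrN sumr_const card_ord sumrMnl.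
  rewrite sumrMnl -mulr_suml.
  move: (\sum_(i < d) a i ^+ 2) (\sum_(i < d) a i) => S2 S1.
  rewrite mulr_natl mulr_natl expr2 mulrnBl !mulr2n addrAC opprD addrA //.
move: H; rewrite E pmulr_rge0 ?ltr0n // subr_ge0 //.
Qed.
Lemma trnorm_bound d (X : 'M[algC]_d) :
  0 <= trnorm X /\ trnorm X ^+ 2 <= d%:R * \sum_i \sum_j `|X i j| ^+ 2.
Proof.
set A := adjmx X *m X.
have hA : adjmx A = A by rewrite /A adjmxM adjmxK.
have nA : A \is normalmx.
  by rewrite qualifE -map_trmx -/(adjmx A) hA.
have uP := spectral_unitarymx A.
have iP := spectral_unit A.
set P := spectralmx A in uP iP.
set lam := spectral_diag A.
have eA : A = invmx P *m diag_mx lam *m P by apply/orthomx_spectralP.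
have aP : invmx P = adjmx P by rewrite invmx_unitary // /adjmx map_trmx.
have eD : diag_mx lam = P *m A *m adjmx P.
  by rewrite eA -aP !mulmxA mulmxV // mul1mx -mulmxA mulmxV // mulmx1.
pose Y := X *m adjmx P.
have lamE i : lam 0 i = \sum_j `|Y j i| ^+ 2.
  have -> : lam 0 i = diag_mx lam i i by rewrite mxE eqxx mulr1n.
  rewrite eD.
  have -> : P *m A *m adjmx P = adjmx Y *m Y by rewrite /Y adjmxM adjmxK /A !mulmxA.
  rewrite mxE; apply: eq_bigr => j _.
  by rewrite adjmxE normCK mulrC.
have lam0 i : 0 <= lam 0 i by rewrite lamE; apply: sumr_ge0 => j _; exact: exprn_ge0.
have sumlam : \sum_i lam 0 i = \sum_i \sum_j `|X i j| ^+ 2.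
  rewrite -mxtrace_diag eD mxtrace_mulC mulmxA -aP mulVmx // mul1mx.
  rewrite /mxtrace exchange_big /=; apply: eq_bigr => i _.
  rewrite /A mxE; apply: eq_bigr => j _; rewrite adjmxE normCK mulrC.
  done.
split.
  by apply: sumr_ge0 => i _; rewrite sqrtC_ge0.
rewrite /trnorm -/A -/lam.
have H : forall i, 0 <= sqrtC (lam 0 i) by move=> i; rewrite sqrtC_ge0.
by move: (@cs_sum d _ H); rewrite (eq_bigr _ (fun i _ => sqrtCK _)) sumlam.
Qed.
Lemma cs_abstract (A B g : algC) : 0 <= A -> 0 <= B ->
  (forall a b, 0 <= a * a^* * A + a * b^* * g + b * a^* * g^* + b * b^* * B) ->
  g * g^* <= A * B.
Proof.
move=> A0 B0 H.
have cA := geC0_conj A0; have cB := geC0_conj B0.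
have [Bp|] := boolP (0 < B).
  have := H B (- g); rewrite !rmorphN /= ?conjCK cB => H1.
  rewrite -subr_ge0 -(pmulr_rge0 _ Bp).
  by have -> : B * (A * B - g * g^*) =
    B * B * A + B * - g^* * g + - g * B * g^* + - g * - g^* * B by ring.
rewrite lt_def negb_and negbK B0 orbF => /eqP B00.
have [Ap|] := boolP (0 < A).
  have := H (- g^*) A; rewrite !rmorphN /= ?conjCK cA => H1.
  rewrite -subr_ge0 -(pmulr_rge0 _ Ap).
  by have -> : A * (A * B - g * g^*) =
    - g^* * - g * A + - g^* * A * g + A * - g * g^* + A * A * B by ring.
rewrite lt_def negb_and negbK A0 orbF => /eqP A00.
subst A B.
have := H 1 (- g); rewrite !rmorphN /= conjC1 => H1.
have : 0 <= - (g * g^*) *+ 2.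
  by have -> : - (g * g^*) *+ 2 = 1 * 1 * 0 + 1 * - g^* * g + - g * 1 * g^* + - g * - g^* * 0 by ring.
rewrite pmulrn_lge0 // oppr_ge0 => H2.
by rewrite mulr0.
Qed.
Definition phi {L d} (S : 'M[algC]_d) (u w : 'M[algC]_(L, d)) : algC :=
  \tr (u *m S *m adjmx w).

Lemma phi_ge0 L d (S : 'M[algC]_d) (u : 'M[algC]_(L, d)) :
  psdmx S -> 0 <= phi S u u.
Proof.
move=> [_ hS]; rewrite /phi /mxtrace; apply: sumr_ge0 => l _.
have := hS (\col_a (u l a)^*).
have -> : adjmx (\col_a (u l a)^*) = row l u.
  by apply/matrixP => i j; rewrite adjmxE !mxE conjCK.
suff -> : (u *m S *m adjmx u) l l = (row l u *m S *m \col_a (u l a)^*) 0 0 by [].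
rewrite !mxE; apply: eq_bigr => a _; rewrite !mxE; congr (_ * _).
by apply: eq_bigr => b _; rewrite !mxE.
Qed.

Lemma phi_herm L d (S : 'M[algC]_d) (u w : 'M[algC]_(L, d)) :
  psdmx S -> phi S w u = (phi S u w)^*.
Proof.
move=> [hS _]; rewrite /phi.
have -> : forall n (Z : 'M[algC]_n), (\tr Z)^* = \tr (adjmx Z).
  move=> n Z; rewrite /mxtrace rmorph_sum; apply: eq_bigr => i _.
  by rewrite adjmxE.
by rewrite !adjmxM adjmxK -hS mulmxA.
Qed.

Lemma adjmxD_scale m n (a b : algC) (u w : 'M[algC]_(m, n)) :
  adjmx (a *: u + b *: w) = a^* *: adjmx u + b^* *: adjmx w.
Proof. by apply/matrixP => i j; rewrite !mxE rmorphD !rmorphM. Qed.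

Lemma phi_expand L d (S : 'M[algC]_d) (u w : 'M[algC]_(L, d)) a b :
  phi S (a *: u + b *: w) (a *: u + b *: w) =
  a * a^* * phi S u u + a * b^* * phi S u w + b * a^* * phi S w u
  + b * b^* * phi S w w.
Proof.
rewrite /phi adjmxD_scale !mulmxDl !mulmxDr !linearD /=.
rewrite -!scalemxAr -!scalemxAl !mxtraceZ !mulrA.
by rewrite [a^* * a]mulrC [b^* * a]mulrC [a^* * b]mulrC [b^* * b]mulrC addrA.
Qed.

Lemma phi_cs L d (S : 'M[algC]_d) (u w : 'M[algC]_(L, d)) :
  psdmx S -> `|phi S u w| ^+ 2 <= phi S u u * phi S w w.
Proof.
move=> hS; rewrite normCK; apply: cs_abstract; rewrite ?phi_ge0 //.
by move=> a b; rewrite -(@phi_herm _ _ S u w hS) -phi_expand phi_ge0.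
Qed.
Definition Wm {d L N} (M : 'M[algC]_(d * L, d * N)) (i : 'I_d) (b : 'I_N) : 'M[algC]_(L, d) :=
  \matrix_(l, a) M (mxtens_index (i, l)) (mxtens_index (a, b)).

Lemma Amap_entry k n m (M : 'M[algC]_(2 ^ k * 2 ^ (n + m), 2 ^ k * 2 ^ n))
  (S : 'M[algC]_(2 ^ k)) (rho : 'M[algC]_(2 ^ n)) i j :
  Amap M S rho i j = \sum_b \sum_c phi S (Wm M i b) (Wm M j c) * rho b c.
Proof.
rewrite /Amap /ptrace2 mxE.
under eq_bigr => l _ do rewrite mxE sum_tens.
under eq_bigr => l _ do under eq_bigr => a' _ do under eq_bigr => c _ do
  rewrite mxE sum_tens mulr_suml.
under eq_bigr => l _ do under eq_bigr => a' _ do under eq_bigr => c _ do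
  under eq_bigr => a _ do rewrite mulr_suml.
under eq_bigr => l _ do under eq_bigr => a' _ do under eq_bigr => c _ do
  under eq_bigr => a _ do under eq_bigr => b _ do rewrite /kron tensmxE adjmxE.
under [RHS]eq_bigr => b _ do under eq_bigr => c _ do
  rewrite /phi /mxtrace mulr_suml.
under [RHS]eq_bigr => b _ do under eq_bigr => c _ do under eq_bigr => l _ do
  rewrite mxE mulr_suml.
under [RHS]eq_bigr => b _ do under eq_bigr => c _ do under eq_bigr => l _ do
  under eq_bigr => a' _ do rewrite mxE !mulr_suml adjmxE.
under [RHS]eq_bigr => b _ do rewrite exchange_big /=.
rewrite [RHS]exchange_big /=.
under [RHS]eq_bigr => l _ do under eq_bigr => b _ do rewrite exchange_big /=.
under [RHS]eq_bigr => l _ do rewrite exchange_big /=.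
under eq_bigr => l _ do under eq_bigr => a' _ do under eq_bigr => c _ do
  rewrite exchange_big /=.
under eq_bigr => l _ do under eq_bigr => a' _ do rewrite exchange_big /=.
apply: eq_bigr => l _; apply: eq_bigr => a' _; apply: eq_bigr => b _;
apply: eq_bigr => c _; apply: eq_bigr => a _.
rewrite !mxE; ring.
Qed.
Lemma trace_phi k n m (M : 'M[algC]_(2 ^ k * 2 ^ (n + m), 2 ^ k * 2 ^ n))
  (S : 'M[algC]_(2 ^ k)) :
  \sum_i \sum_b phi S (Wm M i b) (Wm M i b) =
  \tr (adjmx M *m M *m kron S (1%:M : 'M[algC]_(2 ^ n))).
Proof.
transitivity (\sum_i Amap M S 1%:M i i).
  apply: eq_bigr => i _; rewrite Amap_entry; apply: eq_bigr => b _.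
  rewrite (eq_bigr (fun c => phi S (Wm M i b) (Wm M i c) * (b == c)%:R)).
    by rewrite sum_delta.
  by move=> c _; rewrite mxE.
rewrite /Amap /ptrace2.
under eq_bigr => i _ do rewrite mxE.
rewrite -!mulmxA mxtrace_mulC !mulmxA.
rewrite /mxtrace sum_tens; apply: eq_bigr => i _.
by [].
Qed.
Lemma sum_sub_le (I : finType) (P : pred I) (F : I -> algC) :
  (forall i, 0 <= F i) -> \sum_(i | P i) F i <= \sum_i F i.
Proof.
by move=> F0; rewrite [X in _ <= X](bigID P) /= lerDl sumr_ge0.
Qed.

Lemma sqr_sum_double d N (x : 'I_d -> 'I_N -> algC) :
  (\sum_i \sum_b x i b) ^+ 2 = \sum_i \sum_j \sum_b \sum_c x i b * x j c.
Proof.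
rewrite expr2 mulr_suml; apply: eq_bigr => i _.
rewrite mulr_suml.
under eq_bigr => b _ do rewrite mulr_sumr.
rewrite exchange_big /=; apply: eq_bigr => j _.
apply: eq_bigr => b _.
by rewrite mulr_sumr.
Qed.

Theorem mainTheorem11 (k n m : nat) (hn : (0 < n)%N)
  (M : 'M[algC]_(2 ^ k * 2 ^ (n + m), 2 ^ k * 2 ^ n))
  (Sigma : 'M[algC]_(2 ^ k))
  (hM : loewner_le (adjmx M *m M) 1%:M)
  (hSigma : psdmx Sigma) :
  ((4 ^+ n - 1)%:R)^-1 *
    \sum_(s : {ffun 'I_n -> 'I_4} | s != pauli_id n)
       trnorm (Amap M Sigma (rho_mm n) - Amap M Sigma (rho_P s)) ^+ 2
  <= (2 ^+ k / 2 ^+ n) * ((2 ^+ (2 * n) - 1)^-1)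
     * (\tr (adjmx M *m M *m kron Sigma (1%:M : 'M[algC]_(2 ^ n)))) ^+ 2.
Proof.
set T := \tr _.
pose g i j b c := phi Sigma (Wm M i b) (Wm M j c).
set Ninv : algC := (2 ^+ n)^-1.
have Ninv0 : 0 <= Ninv by rewrite invr_ge0 exprn_ge0 // ler0n.
have Xe s i j : (Amap M Sigma (rho_mm n) - Amap M Sigma (rho_P s)) i j =
    - Ninv * \sum_b \sum_c g i j b c * pauli s b c.
  have -> : forall A B : 'M[algC]_(2 ^ k), (A - B) i j = A i j - B i j by move=> A B; rewrite !mxE.
  rewrite !Amap_entry -sumrB mulr_sumr; apply: eq_bigr => b _.
  rewrite -sumrB mulr_sumr; apply: eq_bigr => c _.
  rewrite /rho_mm /rho_P !mxE /g -/Ninv; ring.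
have c1E : ((4 ^+ n - 1)%:R : algC) = 2 ^+ (2 * n) - 1.
  rewrite natrXE natrB; last by rewrite expn_gt0.
  rewrite natrX exprM; congr (_ ^+ _ - _).
  by rewrite expr2 -natrM.
have key : \sum_(s : {ffun 'I_n -> 'I_4} | s != pauli_id n)
       trnorm (Amap M Sigma (rho_mm n) - Amap M Sigma (rho_P s)) ^+ 2
    <= 2 ^+ k * Ninv * T ^+ 2.
  apply: (le_trans (sum_sub_le _ _ _ _)) => [s|].
    by rewrite exprn_ge0 // (trnorm_bound _ _).1.
  apply: le_trans (ler_sum _ (fun s _ => (trnorm_bound _ _).2)) _.
  rewrite -mulr_sumr natrX.
  under eq_bigr => s _ do under eq_bigr => i _ do under eq_bigr => j _ do
    rewrite Xe normrM normrN (ger0_norm Ninv0) exprMn.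
  under eq_bigr => s _ do under eq_bigr => i _ do rewrite -mulr_sumr.
  under eq_bigr => s _ do rewrite -mulr_sumr.
  rewrite -mulr_sumr exchange_big /=.
  under eq_bigr => i _ do rewrite exchange_big /=.
  under eq_bigr => i _ do under eq_bigr => j _ do rewrite (@pauli_complete n (g i j)).
  have bound : \sum_(i < 2 ^ k) \sum_(j < 2 ^ k)
      (2 ^ n)%:R * \sum_b \sum_c `|g i j b c| ^+ 2 <= (2 ^ n)%:R * T ^+ 2.
    rewrite /T -trace_phi sqr_sum_double mulr_sumr; apply: ler_sum => i _.
    rewrite mulr_sumr; apply: ler_sum => j _.
    rewrite ler_wpM2l ?ler0n //; apply: ler_sum => b _; apply: ler_sum => c _.
    exact: phi_cs.
  apply: (le_trans (ler_wpM2l _ (ler_wpM2l _ bound))).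
  - by rewrite exprn_ge0 // ler0n.
  - by rewrite exprn_ge0.
  have NN : Ninv * (2 ^ n)%:R = 1 by rewrite natrX /Ninv mulVf // expf_neq0 // pnatr_eq0.
  by rewrite expr2 -!mulrA (mulrA Ninv ((2 ^ n)%:R)) NN mul1r.
rewrite c1E.
have -> : 2 ^+ k * Ninv / (2 ^+ (2 * n) - 1) * T ^+ 2 =
   (2 ^+ (2 * n) - 1)^-1 * (2 ^+ k * Ninv * T ^+ 2).
  by rewrite mulrAC [RHS]mulrC -!mulrA.
apply: ler_wpM2l key.
by rewrite invr_ge0 subr_ge0 exprn_ege1 // ler1n.
Qed.
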